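(* Let $\ell\ge1$, $N\ge1$ be integers and $l\ge1$ real. For $1\le n\le N$ let $A_n=\{1\le m\le N: d_\ell(n,m)\le l\}$, and for integers $k\ge0$ let $\mathcal A_n(k)=\{1\le m\le N: d_\ell(A_n,A_m)=k\}$. Then for all $1\le n\le N$ and $k\ge0$, $$|A_n|\le K_1 l\quad\text{and}\quad|\mathcal A_n(k)|\le K_2 l,$$ with $K_1=3\ell^2$ and $K_2=4\ell^6(\ell^2+2)$.
   Context: For $a,b\in\mathbb R$, $d_\ell(a,b)=\min_{1\le i,j\le\ell}|ia-jb|$, and for $A,B\subset\mathbb R$, $d_\ell(A,B)=\inf\{d_\ell(a,b):a\in A,b\in B\}$. *)

(* Defs.v *)
From Stdlib Require Import Reals ZArith List Lia Lra.
Import ListNotations.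
Open Scope R_scope.

(* minimum of a list of integers; default 0 on the empty list
   (never used on an empty list in the theorem below) *)
Definition minZ (s : list Z) : Z :=
  match s with
  | nil => 0%Z
  | x :: t => fold_right Z.min x t
  end.

Definition dl (ell : nat) (a b : Z) : Z :=
  minZ (flat_map (fun i => map (fun j =>
          Z.abs (Z.of_nat i * a - Z.of_nat j * b)%Z) (seq 1 ell)) (seq 1 ell)).

Definition dlset (ell : nat) (A B : list nat) : Z :=
  minZ (flat_map (fun a => map (fun b => dl ell (Z.of_nat a) (Z.of_nat b)) B) A).

Definition An (ell N : nat) (l : R) (n : nat) : list nat :=
  filter (fun m => if Rle_dec (IZR (dl ell (Z.of_nat n) (Z.of_nat m))) l
                   then true else false) (seq 1 N).

Definition calA (ell N : nat) (l : R) (n k : nat) : list nat :=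
  filter (fun m => Z.eqb (dlset ell (An ell N l n) (An ell N l m)) (Z.of_nat k))
         (seq 1 N).

(* Main.v *)
Require Import Defs.
From Stdlib Require Import Reals ZArith List Lia Lra.
Import ListNotations.
Open Scope R_scope.

Fixpoint sumL (l : list nat) : nat :=
  match l with nil => 0%nat | x :: t => (x + sumL t)%nat end.

Lemma minZ_le : forall s x, In x s -> (minZ s <= x)%Z.
Proof.
  intros [|y t] x H; [destruct H|]. simpl.
  revert x H. induction t as [|z t IH]; intros x H; simpl in *.
  - destruct H as [H|[]]; subst; lia.
  - destruct H as [H|[H|H]]; subst.
    + specialize (IH x (or_introl eq_refl)). lia.
    + lia.
    + specialize (IH x (or_intror H)). lia.
Qed.

Lemma minZ_in : forall s, s <> nil -> In (minZ s) s.
Proof.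
  intros [|y t] H; [congruence|]. simpl. clear H.
  induction t as [|z t IH]; simpl in *.
  - left; reflexivity.
  - destruct (Z.min_spec z (fold_right Z.min y t)) as [[_ E]|[_ E]]; rewrite E.
    + right; left; reflexivity.
    + destruct IH as [IH|IH]; [left; exact IH| right; right; exact IH].
Qed.

Lemma dl_le ell a b i j : (1 <= i <= ell)%nat -> (1 <= j <= ell)%nat ->
  (dl ell a b <= Z.abs (Z.of_nat i * a - Z.of_nat j * b))%Z.
Proof.
  intros Hi Hj. unfold dl. apply minZ_le. apply in_flat_map. exists i. split.
  - apply in_seq. lia.
  - apply in_map_iff. exists j. split; [reflexivity| apply in_seq; lia].
Qed.

Lemma dl_ex ell a b : (1 <= ell)%nat -> exists i j, (1 <= i <= ell)%nat /\ (1 <= j <= ell)%nat /\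
  dl ell a b = Z.abs (Z.of_nat i * a - Z.of_nat j * b).
Proof.
  intros H. unfold dl.
  set (L := flat_map _ _).
  assert (Hne : L <> nil).
  { intro E. assert (HI : In (Z.abs (Z.of_nat 1 * a - Z.of_nat 1 * b)) L).
    { unfold L. apply in_flat_map. exists 1%nat. split. apply in_seq; lia.
      apply in_map_iff. exists 1%nat. split; [reflexivity|apply in_seq; lia]. }
    rewrite E in HI. destruct HI. }
  pose proof (minZ_in L Hne) as HI. unfold L in *.
  apply in_flat_map in HI. destruct HI as [i [Hi HI]].
  apply in_map_iff in HI. destruct HI as [j [Ej Hj]].
  rewrite in_seq in Hi, Hj.
  exists i, j. split; [lia|split;[lia|]]. rewrite <- Ej. reflexivity.
Qed.

Lemma dlset_ex ell A B : A <> nil -> B <> nil -> exists a b, In a A /\ In b B /\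
  dlset ell A B = dl ell (Z.of_nat a) (Z.of_nat b).
Proof.
  intros HA HB. unfold dlset.
  set (L := flat_map _ _).
  assert (Hne : L <> nil).
  { destruct A as [|a0 A]; [congruence|]. destruct B as [|b0 B]; [congruence|].
    unfold L. simpl. discriminate. }
  pose proof (minZ_in L Hne) as HI. unfold L in *.
  apply in_flat_map in HI. destruct HI as [a [Ha HI]].
  apply in_map_iff in HI. destruct HI as [b [Eb Hb]].
  exists a, b. split; [exact Ha|split;[exact Hb|]]. rewrite <- Eb. reflexivity.
Qed.

Lemma An_In ell N l n m : In m (An ell N l n) <->
  (1 <= m <= N)%nat /\ IZR (dl ell (Z.of_nat n) (Z.of_nat m)) <= l.
Proof.
  unfold An. rewrite filter_In, in_seq.
  destruct (Rle_dec _ _); split; intros H; try split; try lia; try tauto;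
    try (destruct H; discriminate); destruct H; try lia; try tauto.
Qed.

Lemma IZR_lin i a j b : IZR (Z.of_nat i * Z.of_nat a - Z.of_nat j * Z.of_nat b)
  = INR i * INR a - INR j * INR b.
Proof. rewrite minus_IZR, !mult_IZR, <- !INR_IZR_INZ. reflexivity. Qed.

Definition inI (lo hi : R) (m : nat) : bool :=
  if Rle_dec lo (INR m) then if Rle_dec (INR m) hi then true else false else false.

Lemma inI_true lo hi m : inI lo hi m = true <-> lo <= INR m <= hi.
Proof.
  unfold inI. destruct (Rle_dec lo (INR m)); destruct (Rle_dec (INR m) hi);
    split; intros H; try tauto; try discriminate; try reflexivity; lra.
Qed.

Ltac destr_Rle := repeat match goal with
  | |- context [Rle_dec ?a ?b] => destruct (Rle_dec a b)
  | H : context [Rle_dec ?a ?b] |- _ => destruct (Rle_dec a b) end.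

Lemma count_int : forall len a lo hi,
  INR (length (filter (inI lo hi) (seq a len))) <= Rmax 0 (hi - Rmax lo (INR a) + 1).
Proof.
  induction len as [|len IH]; intros a lo hi.
  - simpl. apply Rmax_l.
  - cbn [seq filter]. specialize (IH (S a) lo hi). rewrite S_INR in IH.
    pose proof (pos_INR (length (filter (inI lo hi) (seq (S a) len)))).
    destruct (inI lo hi a) eqn:E.
    + apply inI_true in E. cbn [length]. rewrite S_INR.
      unfold Rmax in *. destr_Rle; lra.
    + unfold Rmax in *. destr_Rle; lra.
Qed.

Lemma count_int2 a len c x w : 0 < c -> 0 <= w ->
  INR (length (filter (inI ((x - w)/c) ((x + w)/c)) (seq a len))) <= 2 * (w / c) + 1.
Proof.
  intros Hc Hw. eapply Rle_trans; [apply count_int|].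
  assert (E : (x + w)/c - (x - w)/c = 2 * (w/c)) by (field; lra).
  assert (0 <= w / c) by (unfold Rdiv; apply Rmult_le_pos; [lra|left; apply Rinv_0_lt_compat; lra]).
  unfold Rmax. destr_Rle; lra.
Qed.

Lemma divle c w K : 0 < c -> w <= K * c -> w / c <= K.
Proof.
  intros Hc H. unfold Rdiv. replace K with ((K*c)*/c) by (field; lra).
  apply Rmult_le_compat_r; [left; apply Rinv_0_lt_compat; lra | lra].
Qed.

Lemma abs_to_I c x w m : 0 < c -> Rabs (c * INR m - x) <= w ->
  inI ((x - w)/c) ((x + w)/c) m = true.
Proof.
  intros Hc H. apply inI_true.
  assert (H1 : - w <= c * INR m - x <= w) by (revert H; unfold Rabs; destruct Rcase_abs; lra).
  split.
  - unfold Rdiv. replace (INR m) with ((c * INR m) * / c) by (field; lra).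
    apply Rmult_le_compat_r; [left; apply Rinv_0_lt_compat; lra | lra].
  - unfold Rdiv. replace (INR m) with ((c * INR m) * / c) by (field; lra).
    apply Rmult_le_compat_r; [left; apply Rinv_0_lt_compat; lra | lra].
Qed.

Lemma sum_one {T A} (Q : T -> A -> bool) Ts x t : In t Ts -> Q t x = true ->
  (1 <= sumL (map (fun t => if Q t x then 1 else 0) Ts))%nat.
Proof.
  induction Ts as [|t' Ts IH]; intros Ht HQ; [destruct Ht|].
  simpl. destruct Ht as [Ht|Ht].
  - subst. rewrite HQ. lia.
  - specialize (IH Ht HQ). lia.
Qed.

Lemma cover {A T : Type} (P : A -> bool) (Q : T -> A -> bool) (Ts : list T) (s : list A) :
  (forall x, In x s -> P x = true -> exists t, In t Ts /\ Q t x = true) ->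
  (length (filter P s) <= sumL (map (fun t => length (filter (Q t) s)) Ts))%nat.
Proof.
  induction s as [|x s IH]; intros H.
  - simpl. lia.
  - assert (IH' := IH (fun y Hy => H y (or_intror Hy))).
    assert (Hsplit : sumL (map (fun t => length (filter (Q t) (x::s))) Ts) =
       (sumL (map (fun t => if Q t x then 1 else 0) Ts)
        + sumL (map (fun t => length (filter (Q t) s)) Ts))%nat).
    { clear. induction Ts as [|t Ts IH]; cbn [map sumL]; [reflexivity|].
      rewrite IH. cbn [filter]. destruct (Q t x); cbn [length]; lia. }
    rewrite Hsplit. cbn [filter]. destruct (P x) eqn:E.
    + destruct (H x (or_introl eq_refl) E) as [t [Ht HQ]].
      pose proof (sum_one Q Ts x t Ht HQ). cbn [length]. lia.
    + lia.
Qed.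

Lemma sum_bound {T} (f : T -> nat) (Ts : list T) (B : R) :
  (forall t, In t Ts -> INR (f t) <= B) -> INR (sumL (map f Ts)) <= INR (length Ts) * B.
Proof.
  induction Ts as [|t Ts IH]; intros H.
  - simpl. lra.
  - cbn [map sumL length]. rewrite plus_INR, S_INR, Rmult_plus_distr_r, Rmult_1_l.
    pose proof (H t (or_introl eq_refl)).
    pose proof (IH (fun t' Ht' => H t' (or_intror Ht'))). lra.
Qed.

Lemma self_in ell N l n : (1 <= ell)%nat -> 1 <= l -> (1 <= n <= N)%nat -> In n (An ell N l n).
Proof.
  intros Hell Hl Hn. apply An_In. split; [lia|].
  assert (H : (dl ell (Z.of_nat n) (Z.of_nat n) <= 0)%Z).
  { pose proof (dl_le ell (Z.of_nat n) (Z.of_nat n) 1 1 ltac:(lia) ltac:(lia)). lia. }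
  apply IZR_le in H. lra.
Qed.

Lemma part1 ell N l n : (1 <= ell)%nat -> 1 <= l ->
  INR (length (An ell N l n)) <= 3 * INR ell ^ 2 * l.
Proof.
  intros Hell Hl.
  set (Ts := list_prod (seq 1 ell) (seq 1 ell)).
  set (Q := fun (t : nat*nat) =>
    inI ((INR (fst t) * INR n - l)/INR (snd t)) ((INR (fst t) * INR n + l)/INR (snd t))).
  unfold An.
  eapply Rle_trans. apply le_INR. apply (cover _ Q Ts).
  - intros m Hm HP. cbv beta in HP.
    destruct (Rle_dec _ _) as [Hd|]; [|discriminate].
    destruct (dl_ex ell (Z.of_nat n) (Z.of_nat m) Hell) as [i [j [Hi [Hj E]]]].
    exists (i, j). split.
    + unfold Ts. apply in_prod; apply in_seq; lia.
    + unfold Q; simpl fst; simpl snd. apply abs_to_I.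
      * apply lt_0_INR; lia.
      * rewrite E, abs_IZR, IZR_lin in Hd. rewrite Rabs_minus_sym. lra.
  - eapply Rle_trans; [apply (sum_bound _ _ (3*l))|].
    + intros [i j] Ht. apply in_prod_iff in Ht. rewrite !in_seq in Ht.
      unfold Q; simpl fst; simpl snd.
      assert (0 < INR j) by (apply lt_0_INR; lia).
      eapply Rle_trans; [apply count_int2; lra|].
      assert (l / INR j <= l).
      { apply divle; [lra|]. assert (1 <= INR j) by (apply (le_INR 1); lia). nra. }
      lra.
    + unfold Ts. rewrite length_prod, length_seq, mult_INR. right. ring.
Qed.

Definition sg (s : bool) : R := if s then 1 else -1.

Definition Q2 (n k : nat) (l : R) (t : (nat*nat)*(nat*nat)*((nat*nat)*bool)) (m : nat) : bool :=
  match t with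
  | (((i1, j1), (i, j)), ((i2, j2), s)) =>
    let c := INR i2 * INR j * INR j1 in
    let x := INR j2 * INR i * INR i1 * INR n - INR j2 * INR j1 * (sg s * INR k) in
    let w := l * (INR j2 * INR i + INR j * INR j1) in
    inI ((x - w)/c) ((x + w)/c) m
  end.

Lemma abs_comb P Q A B l : 0 <= P -> 0 <= Q -> Rabs B <= l -> Rabs A <= l ->
  Rabs (P * B - Q * A) <= l * (Q + P).
Proof.
  intros HP HQ HB HA. unfold Rminus. eapply Rle_trans; [apply Rabs_triang|].
  rewrite Rabs_Ropp, !Rabs_mult, (Rabs_right P), (Rabs_right Q) by lra.
  pose proof (Rmult_le_compat_l P _ _ HP HB).
  pose proof (Rmult_le_compat_l Q _ _ HQ HA). lra.
Qed.

Lemma part2 ell N l n k : (1 <= ell)%nat -> 1 <= l -> (1 <= n <= N)%nat ->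
  INR (length (calA ell N l n k)) <= 4 * INR ell ^ 6 * (INR ell ^ 2 + 2) * l.
Proof.
  intros Hell Hl Hn.
  set (P := seq 1 ell).
  set (Ts := list_prod (list_prod (list_prod P P) (list_prod P P))
                       (list_prod (list_prod P P) [true; false])).
  unfold calA.
  eapply Rle_trans. apply le_INR. apply (cover _ (Q2 n k l) Ts).
  - intros m Hm HP. apply Z.eqb_eq in HP. apply in_seq in Hm.
    destruct (dlset_ex ell (An ell N l n) (An ell N l m)) as [a [b [Ha [Hb E]]]].
    { intro E; pose proof (self_in ell N l n Hell Hl Hn) as H; rewrite E in H; destruct H. }
    { intro E; pose proof (self_in ell N l m Hell Hl ltac:(lia)) as H; rewrite E in H; destruct H. }
    destruct (dl_ex ell (Z.of_nat a) (Z.of_nat b) Hell) as [i [j [Hi [Hj E2]]]].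
    apply An_In in Ha. destruct Ha as [_ Ha].
    apply An_In in Hb. destruct Hb as [_ Hb].
    destruct (dl_ex ell (Z.of_nat n) (Z.of_nat a) Hell) as [i1 [j1 [Hi1 [Hj1 E3]]]].
    destruct (dl_ex ell (Z.of_nat m) (Z.of_nat b) Hell) as [i2 [j2 [Hi2 [Hj2 E4]]]].
    rewrite E3, abs_IZR, IZR_lin in Ha.
    rewrite E4, abs_IZR, IZR_lin in Hb.
    set (z := (Z.of_nat i * Z.of_nat a - Z.of_nat j * Z.of_nat b)%Z) in E2.
    set (s := Z.leb 0 z).
    assert (HZ : INR i * INR a - INR j * INR b = sg s * INR k).
    { rewrite <- IZR_lin. fold z. rewrite INR_IZR_INZ. unfold sg, s.
      destruct (Z.leb_spec 0 z).
      - replace (1 * IZR (Z.of_nat k)) with (IZR (Z.of_nat k)) by ring. f_equal. lia.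
      - replace (-1 * IZR (Z.of_nat k)) with (IZR (- Z.of_nat k)) by (rewrite opp_IZR; ring).
        f_equal. lia. }
    exists (((i1, j1), (i, j)), ((i2, j2), s)). split.
    + unfold Ts, P. repeat apply in_prod; try (apply in_seq; lia).
      unfold s; destruct (Z.leb 0 z); simpl; tauto.
    + unfold Q2. apply abs_to_I.
      * assert (0 < INR i2) by (apply lt_0_INR; lia).
        assert (0 < INR j) by (apply lt_0_INR; lia).
        assert (0 < INR j1) by (apply lt_0_INR; lia).
        apply Rmult_lt_0_compat; [apply Rmult_lt_0_compat|]; lra.
      * rewrite <- HZ.
        replace (INR i2 * INR j * INR j1 * INR m -
                 (INR j2 * INR i * INR i1 * INR n - INR j2 * INR j1 * (INR i * INR a - INR j * INR b)))
          with ((INR j * INR j1) * (INR i2 * INR m - INR j2 * INR b)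
                - (INR j2 * INR i) * (INR i1 * INR n - INR j1 * INR a)) by ring.
        apply abs_comb.
        -- apply Rmult_le_pos; apply pos_INR.
        -- apply Rmult_le_pos; apply pos_INR.
        -- exact Hb.
        -- exact Ha.
  - eapply Rle_trans; [apply (sum_bound _ _ (2 * (INR ell * INR ell) * l + 3 * l))|].
    + intros [[[i1 j1] [i j]] [[i2 j2] s]] Ht.
      unfold Ts, P in Ht. rewrite !in_prod_iff, !in_seq in Ht.
      destruct Ht as [[[Hi1 Hj1] [Hi Hj]] [[Hi2 Hj2] _]].
      unfold Q2.
      assert (0 < INR i2) by (apply lt_0_INR; lia).
      assert (0 < INR j) by (apply lt_0_INR; lia).
      assert (0 < INR j1) by (apply lt_0_INR; lia).
      assert (Hc : 0 < INR i2 * INR j * INR j1)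
        by (apply Rmult_lt_0_compat; [apply Rmult_lt_0_compat|]; lra).
      assert (Hw : 0 <= l * (INR j2 * INR i + INR j * INR j1)).
      { apply Rmult_le_pos; [lra|]. apply Rplus_le_le_0_compat; apply Rmult_le_pos; apply pos_INR. }
      eapply Rle_trans; [apply count_int2; assumption|].
      assert (Hn2 : INR j2 * INR i + INR j * INR j1 <=
                    (INR ell * INR ell + 1) * (INR i2 * INR j * INR j1)).
      { replace (INR ell * INR ell + 1) with (INR (ell*ell+1)) by (rewrite plus_INR, mult_INR; simpl; ring).
        rewrite <- !mult_INR, <- plus_INR. apply le_INR. nia. }
      assert (l * (INR j2 * INR i + INR j * INR j1) / (INR i2 * INR j * INR j1)
              <= l * (INR ell * INR ell + 1)).
      { apply divle; [exact Hc|].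
        rewrite Rmult_assoc. apply Rmult_le_compat_l; lra. }
      lra.
    + unfold Ts, P. rewrite !length_prod, !length_seq. simpl length.
      rewrite !mult_INR. simpl INR.
      assert (HE : 1 <= INR ell) by (apply (le_INR 1); lia).
      assert (H6 : 0 <= INR ell ^ 6 * l).
      { apply Rmult_le_pos; [apply pow_le|]; lra. }
      simpl pow in *. nra.
Qed.

Theorem mainTheorem6 (ell N : nat) (l : R)
  (hell : (1 <= ell)%nat) (hN : (1 <= N)%nat) (hl : 1 <= l) :
  forall n : nat, (1 <= n <= N)%nat -> forall k : nat,
    INR (length (An ell N l n)) <= 3 * INR ell ^ 2 * l /\
    INR (length (calA ell N l n k)) <= 4 * INR ell ^ 6 * (INR ell ^ 2 + 2) * l.
Proof.
  intros n Hn k. split.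
  - apply part1; assumption.
  - apply part2; assumption.
Qed.
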